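(* Let $N=\{1,\dots,n\}$, let $C:2^N\to\mathbb{R}_{\ge0}$ with $C(\emptyset)=0$ and $\max_S C(S)$ bounded by a polynomial in $n$, and let $\mathcal{D}$ be a bounded product distribution on $2^N$. For $i\in N$ let $v_i=\mathbb{E}_{S\sim\mathcal{D}\mid i\notin S}[C(S\cup\{i\})-C(S)]$. Given samples $(S_j,C(S_j))$, $S_j$ i.i.d. from $\mathcal{D}$, let $\mathcal{S}_i$ (resp. $\mathcal{S}_{-i}$) be the collection of samples containing (resp. not containing) $i$, let $\mathrm{avg}(\mathcal{S})=\frac{1}{|\mathcal{S}|}\sum_{S\in\mathcal{S}}C(S)$, and $\tilde v_i=\mathrm{avg}(\mathcal{S}_i)-\mathrm{avg}(\mathcal{S}_{-i})$. Then for all $i\in N$ and any $\delta>0$, given $\mathrm{poly}(n,1/\delta,1/\epsilon)$ samples, with probability at least $1-\delta$: if $v_i\ge1/\mathrm{poly}(n)$ then $(1-\epsilon)v_i\le\tilde v_i\le(1+\epsilon)v_i$; if $|v_i|<1/\mathrm{poly}(n)$ then $|v_i-\tilde v_i|\le\epsilon$; if $v_i\le-1/\mathrm{poly}(n)$ then $(1+\epsilon)v_i\le\tilde v_i\le(1-\epsilon)v_i$.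
   Context: A bounded product distribution on $2^N$ includes each element independently, with marginal probabilities between $1/\mathrm{poly}(n)$ and $1-1/\mathrm{poly}(n)$. *)

(* Defs.v *)
From HB Require Import structures.
From mathcomp Require Import all_boot all_order all_algebra.
From mathcomp Require Import reals.
Set Implicit Arguments. Unset Strict Implicit. Unset Printing Implicit Defensive.
Import Order.TTheory GRing.Theory Num.Theory.
Local Open Scope ring_scope.

Section Defs.
Variable R : realType.
Variable n : nat.

Definition prodD (p : 'I_n -> R) (S : {set 'I_n}) : R :=
  \prod_(j in S) p j * \prod_(j in ~: S) (1 - p j).

Definition bounded_marginals (a : nat) (p : 'I_n -> R) : Prop :=
  forall j, ((n.+1)%:R ^+ a)^-1 <= p j <= 1 - ((n.+1)%:R ^+ a)^-1.

Definition marg_val (p : 'I_n -> R) (C : {set 'I_n} -> R) (i : 'I_n) : R :=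
  (\sum_(S : {set 'I_n} | i \notin S) prodD p S * (C (i |: S) - C S))
  / (\sum_(S : {set 'I_n} | i \notin S) prodD p S).

Definition sampleP (m : nat) (p : 'I_n -> R) (s : {ffun 'I_m -> {set 'I_n}}) : R :=
  \prod_(j < m) prodD p (s j).

Definition probE (m : nat) (p : 'I_n -> R) (E : pred {ffun 'I_m -> {set 'I_n}}) : R :=
  \sum_(s | E s) sampleP p s.

(* average of C over the samples (with multiplicity) satisfying P;
   0 if there are none (x / 0 = 0 in MathComp) *)
Definition avg_samples (m : nat) (C : {set 'I_n} -> R)
    (s : {ffun 'I_m -> {set 'I_n}}) (P : pred {set 'I_n}) : R :=
  (\sum_(j < m | P (s j)) C (s j)) / (#|[set j : 'I_m | P (s j)]|)%:R.

Definition est_val (m : nat) (C : {set 'I_n} -> R)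
    (s : {ffun 'I_m -> {set 'I_n}}) (i : 'I_n) : R :=
  avg_samples C s (fun S => i \in S) - avg_samples C s (fun S => i \notin S).

End Defs.

(* Main.v *)
Require Import Defs.
From HB Require Import structures.
From mathcomp Require Import all_boot all_order all_algebra.
From mathcomp Require Import reals.
Import Order.TTheory GRing.Theory Num.Theory.
Local Open Scope ring_scope.

From mathcomp Require Import ring lra.
Set Implicit Arguments. Unset Strict Implicit. Unset Printing Implicit Defensive.


Section PD.
Variable R : realType.
Variable n : nat.
Variable p : 'I_n -> R.

Lemma prodDE S : prodD p S = \prod_j (if j \in S then p j else 1 - p j).
Proof.
rewrite /prodD (big_mkcond (fun j => j \in S)) (big_mkcond (fun j => j \in ~: S)) -big_split /=.
apply: eq_bigr => j _; rewrite inE; case: (j \in S) => /=; rewrite ?mulr1 ?mul1r //.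
Qed.

Lemma sum_sets (F : 'I_n -> bool -> R) :
  \sum_(S : {set 'I_n}) \prod_j F j (j \in S) = \prod_j (F j true + F j false).
Proof.
have -> : \prod_j (F j true + F j false) = \prod_j \sum_(b : bool) F j b.
  by apply: eq_bigr => j _; rewrite big_bool.
rewrite bigA_distr_bigA /=.
rewrite (reindex (fun g : {ffun 'I_n -> bool} => [set j | g j])) /=.
  by apply: eq_bigr => g _; apply: eq_bigr => j _; rewrite inE.
exists (fun S : {set 'I_n} => [ffun j => j \in S]) => g _.
  by apply/ffunP => j; rewrite ffunE inE.
by apply/setP => j; rewrite inE ffunE.
Qed.

Lemma sum_prodD_h i (h : bool -> R) :
  \sum_(S : {set 'I_n}) prodD p S * h (i \in S) = p i * h true + (1 - p i) * h false.
Proof.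
pose F := fun j (b : bool) => (if b then p j else 1 - p j) * (if j == i then h b else 1).
have E : forall S, prodD p S * h (i \in S) = \prod_j F j (j \in S).
  move=> S; rewrite prodDE /F big_split /=.
  rewrite [X in _ = _ * X](bigD1 i) //= eqxx.
  rewrite [X in _ = _ * (_ * X)]big1 ?mulr1 //; last by move=> j /negPf ->.
rewrite (eq_bigr _ (fun S _ => E S)) sum_sets (bigD1 i) //= big1 ?mulr1 /F ?eqxx //.
by move=> j /negPf ->; rewrite !mulr1; ring.
Qed.

Lemma prodD_sum1 : \sum_(S : {set 'I_n}) prodD p S = 1.
Proof.
under eq_bigr do rewrite prodDE.
have /= -> := sum_sets (fun j (b : bool) => if b then p j else 1 - p j).
by rewrite big1 // => j _; ring.
Qed.

End PD.


Section PD2.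
Variable R : realType.
Variable n : nat.
Variable p : 'I_n -> R.

Lemma prodD_ge0 (S : {set 'I_n}) : (forall j, 0 <= p j <= 1) -> 0 <= prodD p S.
Proof.
move=> hp; rewrite prodDE; apply: prodr_ge0 => j _.
by case: (j \in S); have /andP[h1 h2] := hp j; lra.
Qed.

Lemma prodD_add (i : 'I_n) (S : {set 'I_n}) : i \notin S -> prodD p (i |: S) * (1 - p i) = prodD p S * p i.
Proof.
move=> iS; rewrite !prodDE (bigD1 i) //= [in RHS](bigD1 i) //= setU11 (negPf iS).
rewrite (eq_bigr (fun j => if j \in S then p j else 1 - p j)); first by ring.
by move=> j /negPf ji; rewrite in_setU1 ji.
Qed.

Lemma reindex_add (i : 'I_n) (g : {set 'I_n} -> R) :
  \sum_(T : {set 'I_n} | i \in T) g T = \sum_(S : {set 'I_n} | i \notin S) g (i |: S).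
Proof.
rewrite (reindex_onto (fun S => i |: S) (fun T => T :\ i)); last by move=> T; apply: setD1K.
apply: eq_bigl => S; rewrite setU11 /=.
case iS: (i \in S).
  apply/negbTE/eqP => E; move: iS; rewrite -E; by rewrite setD11.
by rewrite setU1K ?iS // eqxx.
Qed.

Lemma sum_out (i : 'I_n) : \sum_(S : {set 'I_n} | i \notin S) prodD p S = 1 - p i.
Proof.
have := sum_prodD_h p i (fun b => (~~ b)%:R); rewrite /= mulr0 mulr1 add0r => <-.
rewrite big_mkcond /=; apply: eq_bigr => S _; by case: (i \in S) => /=; rewrite ?mulr0 ?mulr1.
Qed.

Lemma sum_in (i : 'I_n) : \sum_(S : {set 'I_n} | i \in S) prodD p S = p i.
Proof.
have := sum_prodD_h p i (fun b => b%:R); rewrite /= mulr0 mulr1 addr0 => <-.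
rewrite big_mkcond /=; apply: eq_bigr => S _; by case: (i \in S) => /=; rewrite ?mulr0 ?mulr1.
Qed.

Lemma marg_valE (C : {set 'I_n} -> R) (i : 'I_n) : 0 < p i < 1 ->
  marg_val p C i = (\sum_(S : {set 'I_n} | i \in S) prodD p S * C S) / p i
                 - (\sum_(S : {set 'I_n} | i \notin S) prodD p S * C S) / (1 - p i).
Proof.
move=> /andP[p0 p1].
rewrite /marg_val sum_out.
have -> : \sum_(S : {set 'I_n} | i \notin S) prodD p S * (C (i |: S) - C S) =
   \sum_(S : {set 'I_n} | i \notin S) prodD p S * C (i |: S) - \sum_(S : {set 'I_n} | i \notin S) prodD p S * C S.
  by rewrite -sumrB; apply: eq_bigr => S _; ring.
have -> : \sum_(S : {set 'I_n} | i \notin S) prodD p S * C (i |: S) =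
   (1 - p i) / p i * \sum_(T : {set 'I_n} | i \in T) prodD p T * C T.
  rewrite reindex_add mulr_sumr; apply: eq_bigr => S iS.
  have := prodD_add iS => E.
  have -> : prodD p S = prodD p (i |: S) * (1 - p i) / p i.
    by rewrite E mulfK // gt_eqF.
  by field; rewrite gt_eqF.
field; rewrite gt_eqF // ?subr_gt0 //= gt_eqF //.
Qed.

End PD2.


Section Samp.
Variable R : realType.
Variable n m : nat.
Variable p : 'I_n -> R.
Hypothesis hp : forall j, 0 <= p j <= 1.

Lemma sampleP_ge0 (s : {ffun 'I_m -> {set 'I_n}}) : 0 <= sampleP p s.
Proof. by apply: prodr_ge0 => j _; apply: prodD_ge0. Qed.

Lemma sample_prod (G : 'I_m -> {set 'I_n} -> R) :
  \sum_(s : {ffun 'I_m -> {set 'I_n}}) \prod_j (prodD p (s j) * G j (s j))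
  = \prod_j \sum_(S : {set 'I_n}) prodD p S * G j S.
Proof. by rewrite bigA_distr_bigA. Qed.

Lemma sampleP_sum1 : \sum_(s : {ffun 'I_m -> {set 'I_n}}) sampleP p s = 1.
Proof.
have E := sample_prod (fun _ _ => 1); simpl in E.
rewrite /sampleP; apply: eq_trans _ (eq_trans E _).
  by apply: eq_bigr => s _; apply: eq_bigr => j _; rewrite mulr1.
apply: big1 => j _.
under eq_bigr do rewrite mulr1.
exact: prodD_sum1.
Qed.

Lemma cross (Y : {set 'I_n} -> R) : \sum_(S : {set 'I_n}) prodD p S * Y S = 0 ->
  forall j k : 'I_m, j != k ->
  \sum_(s : {ffun 'I_m -> {set 'I_n}}) sampleP p s * (Y (s j) * Y (s k)) = 0.
Proof.
move=> hY j k jk.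
pose G := fun (l : 'I_m) (S : {set 'I_n}) => if l == j then Y S else if l == k then Y S else 1.
have := sample_prod G.
have Gj : \sum_(S : {set 'I_n}) prodD p S * G j S = 0.
  by apply: eq_trans _ hY; apply: eq_bigr => S _; rewrite /G eqxx.
rewrite [X in _ = X -> _](bigD1 j) //= Gj mul0r => E; apply: eq_trans _ E.
apply: eq_bigr => s _; rewrite big_split /=; congr (_ * _).
rewrite (bigD1 j) //= (bigD1 k) //=; last by rewrite eq_sym.
have kj : (k == j) = false by rewrite eq_sym (negPf jk).
rewrite /G eqxx kj eqxx big1 ?mulr1 //.
by move=> l /andP[/negPf -> /negPf ->].
Qed.

Lemma second (Y : {set 'I_n} -> R) (B : R) :
  \sum_(S : {set 'I_n}) prodD p S * Y S = 0 -> (forall S, Y S ^+ 2 <= B) ->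
  \sum_(s : {ffun 'I_m -> {set 'I_n}}) sampleP p s * (\sum_j Y (s j)) ^+ 2 <= m%:R * B.
Proof.
move=> hY hB.
have -> : \sum_(s : {ffun 'I_m -> {set 'I_n}}) sampleP p s * (\sum_j Y (s j)) ^+ 2 =
   \sum_(j < m) \sum_(k < m) \sum_(s : {ffun 'I_m -> {set 'I_n}}) sampleP p s * (Y (s j) * Y (s k)).
  symmetry; under eq_bigr => j _ do rewrite exchange_big.
  rewrite exchange_big /=; apply: eq_bigr => s _.
  rewrite expr2 mulr_suml mulr_sumr; apply: eq_bigr => j _.
  rewrite mulr_sumr mulr_sumr; apply: eq_bigr => k _; ring.
rewrite mulr_natl -[m in B *+ m]card_ord -sumr_const; apply: ler_sum => j _.
rewrite (bigD1 j) //= [X in _ + X]big1 ?addr0; last by move=> k kj; apply: (cross hY); rewrite eq_sym.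
apply: le_trans (_ : \sum_(s : {ffun 'I_m -> {set 'I_n}}) sampleP p s * B <= B).
  apply: ler_sum => s _; apply: ler_wpM2l; first exact: sampleP_ge0.
  by rewrite -expr2.
by rewrite -mulr_suml sampleP_sum1 mul1r.
Qed.

Lemma cheb (Y : {set 'I_n} -> R) (B t : R) :
  \sum_(S : {set 'I_n}) prodD p S * Y S = 0 -> (forall S, Y S ^+ 2 <= B) -> 0 < t ->
  probE p (fun s : {ffun 'I_m -> {set 'I_n}} => t <= `|\sum_j Y (s j)|) <= m%:R * B / t ^+ 2.
Proof.
move=> hY hB t0.
rewrite /probE big_mkcond /=.
apply: le_trans (_ : \sum_(s : {ffun 'I_m -> {set 'I_n}}) sampleP p s * ((\sum_j Y (s j)) ^+ 2 / t ^+ 2) <= _).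
  apply: ler_sum => s _; case: ifP => h.
    rewrite -[X in X <= _]mulr1; apply: ler_wpM2l; first exact: sampleP_ge0.
    rewrite ler_pdivlMr ?exprn_gt0 // mul1r -[X in _ <= X]real_normK ?num_real //.
    by rewrite !expr2; apply: ler_pM => //; rewrite ltW.
  by apply: mulr_ge0; [exact: sampleP_ge0| apply: divr_ge0; rewrite ?sqr_ge0 ?exprn_ge0 ?ltW].
under eq_bigr do rewrite mulrA.
rewrite -mulr_suml ler_wpM2r //; first by rewrite invr_ge0 exprn_ge0 // ltW.
exact: second.
Qed.

Lemma probE_union (E F : pred {ffun 'I_m -> {set 'I_n}}) :
  probE p (fun s => E s || F s) <= probE p E + probE p F.
Proof.
rewrite /probE (big_mkcond (fun s => E s || F s)) (big_mkcond E) (big_mkcond F) -big_split /=.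
apply: ler_sum => s _.
have := sampleP_ge0 s; case: (E s); case: (F s) => /=; lra.
Qed.

Lemma probE_compl (E : pred {ffun 'I_m -> {set 'I_n}}) :
  probE p E = 1 - probE p (fun s => ~~ E s).
Proof.
rewrite /probE -sampleP_sum1 (bigID E predT) /=; ring.
Qed.

Lemma probE_mono (E F : pred {ffun 'I_m -> {set 'I_n}}) :
  (forall s, E s -> F s) -> probE p E <= probE p F.
Proof.
move=> EF; rewrite /probE (big_mkcond E) (big_mkcond F) /=; apply: ler_sum => s _.
have := sampleP_ge0 s; have := EF s; case: (E s); case: (F s) => //= h; try lra.
Qed.

End Samp.


Section Det.
Variable R : realType.

Lemma ratio_close (N T mu m L eta : R) : 0 < eta -> 0 < m * L / 2 < N ->
  `|T - mu * N| < eta * m * L / 4 -> `|T / N - mu| < eta / 2.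
Proof.
move=> e0 /andP[h0 hN] hT.
have N0 : 0 < N by apply: lt_trans hN.
have -> : T / N - mu = (T - mu * N) / N by field; rewrite gt_eqF.
rewrite normrM normfV (gtr0_norm N0) ltr_pdivrMr //.
apply: lt_le_trans hT _.
have : eta / 2 * (m * L / 2) <= eta / 2 * N.
  by rewrite ler_wpM2l ?ltW // divr_gt0.
by apply: le_trans; rewrite le_eqVlt; apply/orP; left; apply/eqP; field.
Qed.

Lemma det (N1 N0 T1 T0 mu1 mu0 m L P eta : R) :
  N1 + N0 = m -> 0 < L -> L <= P -> L <= 1 - P -> 0 < m -> 0 < eta ->
  `|N1 - m * P| < m * L / 2 ->
  `|T1 - mu1 * N1| < eta * m * L / 4 -> `|T0 - mu0 * N0| < eta * m * L / 4 ->
  `|(T1 / N1 - T0 / N0) - (mu1 - mu0)| < eta.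
Proof.
move=> hN L0 LP LQ m0 e0 hZ h1 h0.
have mL0 : 0 < m * L / 2 by rewrite divr_gt0 ?mulr_gt0.
have mPL : m * L <= m * P by rewrite ler_pM2l.
have mQL : m * L <= m * (1 - P) by rewrite ler_pM2l.
move: hZ; rewrite ltr_norml => /andP[z1 z2].
have a1 := ratio_close e0 _ h1.
have a0 := ratio_close e0 _ h0.
have b1 : `|T1 / N1 - mu1| < eta / 2 by apply: a1; rewrite mL0 /=; lra.
have b0 : `|T0 / N0 - mu0| < eta / 2 by apply: a0; rewrite mL0 /=; lra.
have -> : (T1 / N1 - T0 / N0) - (mu1 - mu0) = (T1 / N1 - mu1) - (T0 / N0 - mu0) by ring.
apply: le_lt_trans (ler_normB _ _) _.
lra.
Qed.

End Det.


Section Ar.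
Variable R : realType.

Lemma arith (X xa xb xc d e m : R) : 2 <= X -> 1 <= xa -> 1 <= xb -> 1 <= xc -> 0 < d -> 0 < e ->
  xa ^+ 2 * xb ^+ 2 * xc ^+ 2 * X ^+ 6 * (1 + d^-1) * (1 + e^-1) ^+ 2 <= m ->
  m * 1 / (m * xa^-1 / 2) ^+ 2 +
  (m * xb ^+ 2 / (e * xc^-1 * m * xa^-1 / 4) ^+ 2 +
   m * xb ^+ 2 / (e * xc^-1 * m * xa^-1 / 4) ^+ 2) <= d.
Proof.
move=> X2 xa1 xb1 xc1 d0 e0 hm.
set T := xa ^+ 2 * xb ^+ 2 * xc ^+ 2.
set u := e^-1.
have T1 : 1 <= T by rewrite /T !mulr_ege1 // exprn_ege1.
have xaT : xa ^+ 2 <= T.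
  rewrite /T -mulrA -[X in X <= _]mulr1; apply: ler_wpM2l; first by rewrite exprn_ge0 //; lra.
  by rewrite mulr_ege1 // exprn_ege1.
have u0 : 0 < u by rewrite invr_gt0.
have X6 : 64 <= X ^+ 6.
  have X2' : 4 <= X ^+ 2 by rewrite expr2; nra.
  have -> : X ^+ 6 = X ^+ 2 * X ^+ 2 * X ^+ 2 by rewrite -!exprD.
  apply: le_trans (_ : 4 * 4 * 4 <= _); first lra.
  by apply: ler_pM; try apply: ler_pM; rewrite ?mulr_ge0 //; lra.
have m0 : 0 < m.
  apply: lt_le_trans hm; rewrite !mulr_gt0 ?exprn_gt0 //; try lra.
  all: try by rewrite addr_gt0 // invr_gt0.
have E : m * 1 / (m * xa^-1 / 2) ^+ 2 +
  (m * xb ^+ 2 / (e * xc^-1 * m * xa^-1 / 4) ^+ 2 +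
   m * xb ^+ 2 / (e * xc^-1 * m * xa^-1 / 4) ^+ 2) = (4 * xa ^+ 2 + 32 * T * u ^+ 2) / m.
  rewrite /T /u; field.
  rewrite (gt_eqF m0) (gt_eqF e0) (gt_eqF (lt_le_trans ltr01 xa1)) (gt_eqF (lt_le_trans ltr01 xc1)) //.
rewrite E ler_pdivrMr //.
have hm' : T * X ^+ 6 * (d + 1) * (1 + u) ^+ 2 <= d * m.
  have -> : T * X ^+ 6 * (d + 1) * (1 + u) ^+ 2 = d * (T * X ^+ 6 * (1 + d^-1) * (1 + u) ^+ 2).
    by field; rewrite gt_eqF.
  by rewrite ler_pM2l.
apply: le_trans hm'.
have h1 : 64 * T * (1 + u) ^+ 2 <= T * X ^+ 6 * (d + 1) * (1 + u) ^+ 2.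
  rewrite ler_pM2r ?exprn_gt0 ?addr_gt0 //.
  have : 64 * T <= T * X ^+ 6 by rewrite mulrC ler_pM2l //; lra.
  nra.
apply: le_trans h1.
rewrite !expr2; nra.
Qed.

End Ar.


Lemma card_sum (R : realType) (m : nat) (P : pred 'I_m) :
  (#|[set j | P j]|)%:R = \sum_j (P j)%:R :> R.
Proof.
rewrite -sum1_card natr_sum big_mkcond /=; apply: eq_bigr => j _.
by rewrite inE; case: (P j).
Qed.

Lemma sum_cond (R : realType) (m : nat) (P : pred 'I_m) (F : 'I_m -> R) :
  \sum_(j | P j) F j = \sum_j (P j)%:R * F j.
Proof.
rewrite big_mkcond /=; apply: eq_bigr => j _.
by case: (P j); rewrite ?mul1r ?mul0r.
Qed.

Lemma sum_condS (R : realType) (n : nat) (P : pred {set 'I_n}) (F : {set 'I_n} -> R) :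
  \sum_(S : {set 'I_n} | P S) F S = \sum_(S : {set 'I_n}) (P S)%:R * F S.
Proof.
rewrite big_mkcond /=; apply: eq_bigr => j _.
by case: (P j); rewrite ?mul1r ?mul0r.
Qed.

Lemma mu_bounds (R : realType) (n : nat) (p : 'I_n -> R) (C : {set 'I_n} -> R) (Bd : R)
   (Q : pred {set 'I_n}) :
  (forall j, 0 <= p j <= 1) -> (forall S, 0 <= C S <= Bd) ->
  let W := \sum_(S : {set 'I_n} | Q S) prodD p S in 0 < W ->
  0 <= (\sum_(S : {set 'I_n} | Q S) prodD p S * C S) / W <= Bd.
Proof.
move=> hp hC W W0.
apply/andP; split.
  apply: divr_ge0; last exact: ltW.
  by apply: sumr_ge0 => S _; rewrite mulr_ge0 ?prodD_ge0 //; have /andP[] := hC S.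
rewrite ler_pdivrMr // /W mulr_sumr; apply: ler_sum => S _.
rewrite mulrC ler_wpM2r ?prodD_ge0 //; by have /andP[] := hC S.
Qed.

Lemma zero_mean (R : realType) (n : nat) (p : 'I_n -> R) (C : {set 'I_n} -> R)
   (Q : pred {set 'I_n}) :
  let W := \sum_(S : {set 'I_n} | Q S) prodD p S in 0 < W ->
  \sum_(S : {set 'I_n}) prodD p S * ((Q S)%:R *
       (C S - (\sum_(S : {set 'I_n} | Q S) prodD p S * C S) / W)) = 0.
Proof.
move=> W W0.
set mu := _ / W.
have -> : \sum_(S : {set 'I_n}) prodD p S * ((Q S)%:R * (C S - mu)) =
   \sum_(S : {set 'I_n} | Q S) prodD p S * C S - mu * W.
  rewrite /W mulr_sumr -sumrB (@sum_condS _ _ Q); apply: eq_bigr => S _; ring.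
rewrite /mu divfK ?subrr // gt_eqF //.
Qed.

Lemma pow_mono1 (R : realType) (x : R) (k l : nat) : 1 <= x -> (k <= l)%N -> x ^+ k <= x ^+ l.
Proof.
move=> x1 kl; rewrite -(subnKC kl) exprD ler_peMr ?exprn_ege1 //.
by rewrite exprn_ge0 // (le_trans ler01).
Qed.

Unset Implicit Arguments.
Theorem lemma11 (R : realType) (a b c : nat) :
  exists K : nat,
  forall (n : nat) (p : 'I_n -> R) (C : {set 'I_n} -> R),
    bounded_marginals a p ->
    (forall S, 0 <= C S) -> C set0 = 0 ->
    (forall S, C S <= (n.+1)%:R ^+ b) ->
  forall (i : 'I_n) (delta eps : R), 0 < delta -> 0 < eps ->
  forall m : nat,
    ((n.+1)%:R * (1 + delta^-1) * (1 + eps^-1)) ^+ K <= m%:R ->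
    let v := marg_val p C i in
    let thr := ((n.+1)%:R ^+ c)^-1 in
    1 - delta <= probE p (fun s : {ffun 'I_m -> {set 'I_n}} =>
      let vt := est_val C s i in
      [&& (thr <= v) ==> ((1 - eps) * v <= vt <= (1 + eps) * v),
          (`|v| < thr) ==> (`|v - vt| <= eps)
        & (v <= - thr) ==> ((1 + eps) * v <= vt <= (1 - eps) * v)]).
Proof.
exists (6 + a * 2 + b * 2 + c * 2)%N.
move=> n p C hp hC0 hC00 hCB i delta eps d0 e0 m hm.
cbv zeta.
set v := marg_val p C i.
have n0 : (0 < n)%N := leq_ltn_trans (leq0n i) (ltn_ord i).
have X2 : 2 <= (n.+1)%:R :> R by rewrite ler_nat ltnS.
set X : R := (n.+1)%:R in X2 hm hp hCB *.
have X1 : 1 <= X by lra.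
have xa1 : 1 <= X ^+ a by rewrite exprn_ege1.
have xb1 : 1 <= X ^+ b by rewrite exprn_ege1.
have xc1 : 1 <= X ^+ c by rewrite exprn_ege1.
set xa := X ^+ a in xa1 hp *.
set xb := X ^+ b in xb1 hCB *.
set xc := X ^+ c in xc1 *.
set thr := xc^-1.
set L := xa^-1 in hp *.
have L0 : 0 < L by rewrite invr_gt0; lra.
have hpL : forall j, L <= p j <= 1 - L := hp.
have hp' : forall j, 0 <= p j <= 1.
  by move=> j; have /andP[h1 h2] := hpL j; apply/andP; split; lra.
have PL : L <= p i by case/andP: (hpL i).
have QL : L <= 1 - p i by have /andP[h1 h2] := hpL i; lra.
have P0 : 0 < p i < 1 by apply/andP; split; lra.
have hC : forall S, 0 <= C S <= xb by move=> S; rewrite hC0 hCB.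
set mu1 := (\sum_(S : {set 'I_n} | i \in S) prodD p S * C S) / p i.
set mu0 := (\sum_(S : {set 'I_n} | i \notin S) prodD p S * C S) / (1 - p i).
have hv : v = mu1 - mu0 by rewrite /v marg_valE.
have W1 := sum_in p i.
have W0 := sum_out p i.
have mu1b : 0 <= mu1 <= xb.
  have := @mu_bounds R n p C xb (fun S => i \in S) hp' hC; rewrite /= W1; apply; lra.
have mu0b : 0 <= mu0 <= xb.
  have := @mu_bounds R n p C xb (fun S => i \notin S) hp' hC; rewrite /= W0; apply; lra.
pose Y1 := fun S : {set 'I_n} => ((i \in S)%:R * (C S - mu1)).
pose Y0 := fun S : {set 'I_n} => ((i \notin S)%:R * (C S - mu0)).
pose Z := fun S : {set 'I_n} => (i \in S)%:R - p i.
have hY1 : \sum_(S : {set 'I_n}) prodD p S * Y1 S = 0.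
  have := @zero_mean R n p C (fun S => i \in S); rewrite /= W1; apply; lra.
have hY0 : \sum_(S : {set 'I_n}) prodD p S * Y0 S = 0.
  have := @zero_mean R n p C (fun S => i \notin S); rewrite /= W0; apply; lra.
have hZ : \sum_(S : {set 'I_n}) prodD p S * Z S = 0.
  by have /= -> := sum_prodD_h p i (fun b => b%:R - p i); ring.
have bY1 : forall S, Y1 S ^+ 2 <= xb ^+ 2.
  move=> S; rewrite /Y1; have /andP[c1 c2] := hC S; have /andP[m1 m2] := mu1b.
  case: (i \in S); rewrite ?mul1r ?mul0r !expr2; nra.
have bY0 : forall S, Y0 S ^+ 2 <= xb ^+ 2.
  move=> S; rewrite /Y0; have /andP[c1 c2] := hC S; have /andP[m1 m2] := mu0b.
  case: (i \notin S); rewrite ?mul1r ?mul0r !expr2; nra.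
have bZ : forall S, Z S ^+ 2 <= 1.
  move=> S; rewrite /Z; have /andP[p1 p2] := P0.
  case: (i \in S) => /=; rewrite ?mulr1n ?mulr0n !expr2; nra.
have thr0 : 0 < thr by rewrite invr_gt0; lra.
have thr1 : thr <= 1 by rewrite invf_le1 //; lra.
set eta := eps * thr.
have eta0 : 0 < eta by rewrite mulr_gt0.
have hm' : xa ^+ 2 * xb ^+ 2 * xc ^+ 2 * X ^+ 6 * (1 + delta^-1) * (1 + eps^-1) ^+ 2 <= m%:R.
  apply: le_trans hm.
  have D1 : 1 <= 1 + delta^-1 by rewrite lerDl invr_ge0 ltW.
  have E1 : 1 <= 1 + eps^-1 by rewrite lerDl invr_ge0 ltW.
  rewrite !exprMn.
  have -> : X ^+ (6 + a * 2 + b * 2 + c * 2) = xa ^+ 2 * xb ^+ 2 * xc ^+ 2 * X ^+ 6.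
    by rewrite !exprD !exprM /xa /xb /xc; ring.
  have T6 : 0 < xa ^+ 2 * xb ^+ 2 * xc ^+ 2 * X ^+ 6.
    by rewrite !mulr_gt0 // exprn_gt0 //; lra.
  apply: ler_pM.
  - by rewrite mulr_ge0 ?ltW //; lra.
  - rewrite exprn_ge0 //; lra.
  - rewrite ler_pM2l //; rewrite -[X in X <= _]expr1; apply: pow_mono1 => //.
  - by apply: pow_mono1.
have m0 : 0 < m%:R :> R.
  have D0 : 0 < 1 + delta^-1 by rewrite addr_gt0 // invr_gt0.
  have E0 : 0 < 1 + eps^-1 by rewrite addr_gt0 // invr_gt0.
  apply: lt_le_trans hm'; rewrite !mulr_gt0 // ?exprn_gt0 //; lra.
set tZ := m%:R * L / 2.
set tY := eta * m%:R * L / 4.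
have tZ0 : 0 < tZ by rewrite /tZ divr_gt0 // mulr_gt0.
have tY0 : 0 < tY by rewrite /tY divr_gt0 // !mulr_gt0.
have cZ := cheb m hp' hZ bZ tZ0.
have cY1 := cheb m hp' hY1 bY1 tY0.
have cY0 := cheb m hp' hY0 bY0 tY0.
rewrite probE_compl.
set PB := probE p _.
suff : PB <= delta by lra.
rewrite /PB.
apply: le_trans (@probE_mono R n m p hp' _
   (fun s => (tZ <= `|\sum_j Z (s j)|) || ((tY <= `|\sum_j Y1 (s j)|) || (tY <= `|\sum_j Y0 (s j)|))) _) _.
  move=> s /=; case: (boolP (_ || _)) => // /norP[nZ /norP[nY1 nY0]] /negP ng; exfalso; apply: ng.
  rewrite -ltNge in nZ; rewrite -ltNge in nY1; rewrite -ltNge in nY0.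
  set N1 := \sum_(j < m) ((i \in s j)%:R : R).
  set N0 := \sum_(j < m) ((i \notin s j)%:R : R).
  set T1 := \sum_(j < m) (i \in s j)%:R * C (s j).
  set T0 := \sum_(j < m) (i \notin s j)%:R * C (s j).
  have eN : N1 + N0 = m%:R.
    rewrite /N1 /N0 -big_split /=.
    rewrite (eq_bigr (fun _ => 1)); first by rewrite sumr_const card_ord.
    by move=> j _; case: (i \in s j) => /=; rewrite ?addr0 ?add0r.
  have eZ : \sum_j Z (s j) = N1 - m%:R * p i.
    by rewrite /Z sumrB sumr_const card_ord mulr_natl.
  have eY1 : \sum_j Y1 (s j) = T1 - mu1 * N1.
    by rewrite /Y1 /T1 /N1 mulr_sumr -sumrB; apply: eq_bigr => j _; ring.
  have eY0 : \sum_j Y0 (s j) = T0 - mu0 * N0.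
    by rewrite /Y0 /T0 /N0 mulr_sumr -sumrB; apply: eq_bigr => j _; ring.
  have eV : est_val C s i = T1 / N1 - T0 / N0.
    rewrite /est_val /avg_samples !card_sum.
    by rewrite (@sum_cond R m (fun j => i \in s j)) (@sum_cond R m (fun j => i \notin s j)).
  rewrite eZ in nZ; rewrite eY1 in nY1; rewrite eY0 in nY0.
  have close := det eN L0 PL QL m0 eta0 nZ nY1 nY0.
  have hvt : `|est_val C s i - v| < eta by rewrite eV hv.
  move: hvt; rewrite ltr_norml => /andP[h1 h2].
  apply/and3P; split; apply/implyP => h.
  - have : eta <= eps * v by rewrite /eta ler_pM2l.
    move=> hh; apply/andP; split; lra.
  - have hh : eta <= eps by rewrite /eta -[X in _ <= X]mulr1 ler_pM2l.
    rewrite distrC; apply: ltW; rewrite ltr_norml; apply/andP; split; lra.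
  - have : eta <= eps * (- v) by rewrite /eta ler_pM2l // lerNr.
    move=> hh; apply/andP; split; lra.
apply: le_trans (probE_union hp' _ _) _.
apply: le_trans (lerD cZ (probE_union hp' _ _)) _.
apply: le_trans (lerD (lexx _) (lerD cY1 cY0)) _.
exact: (arith X2 xa1 xb1 xc1 d0 e0 hm').
Qed.
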